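(* Let $d, t$ be integers with $d \geq t-1$ and $t \geq 4$. Then \[ \mathrm{rb}(W_d, F_t) \ge \left\lfloor \frac{2t-5}{t-2}\, d \right\rfloor + 1, \] i.e., there is an edge-coloring of $W_d$ with exactly $\left\lfloor \frac{2t-5}{t-2} d \right\rfloor$ colors containing no rainbow subgraph isomorphic to $F_t$.
   Context: A subgraph of an edge-colored graph is rainbow if no two of its edges have the same color. For graphs $G$ and $H$, the rainbow number $\mathrm{rb}(G,H)$ is the minimum integer $k$ such that every edge-coloring of $G$ that uses at least $k$ distinct colors contains a rainbow subgraph isomorphic to $H$. $W_d$ is the wheel: a hub vertex adjacent to all vertices of a cycle $v_1\cdots v_dv_1$. The fan $F_t$ is obtained from a cycle $v_1v_2\cdots v_tv_1$ by adding all chords $v_1v_i$, $3 \le i \le t-1$. *)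

(* Defs.v *)
From mathcomp Require Import all_boot.
From mathcomp Require Import boolp.
Set Implicit Arguments. Unset Strict Implicit. Unset Printing Implicit Defensive.

(* A simple graph is a finType of vertices with a symmetric irreflexive
   adjacency relation [adj]. *)

Definition edges (T : finType) (adj : rel T) : {set {set T}} :=
  [set [set x; y] | x in [set: T], y in [set: T] & adj x y].

(* An edge-coloring is any map from (vertex pairs) to colors (nat);
   only its values on edges matter.  Number of distinct colors used on E(G): *)
Definition ncolors (T : finType) (adj : rel T) (c : {set T} -> nat) : nat :=
  size (undup [seq c e | e <- enum (edges adj)]).

Definition has_rainbow_copy (T : finType) (adjG : rel T)
    (U : finType) (adjH : rel U) (c : {set T} -> nat) : Prop :=
  exists f : U -> T,
    [/\ injective f,
        (forall u v, adjH u v -> adjG (f u) (f v)) &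
        {in edges adjH &, injective (fun e : {set U} => c (f @: e))}].

Definition rb_prop (T : finType) (adjG : rel T) (U : finType) (adjH : rel U)
    (k : nat) : Prop :=
  forall c : {set T} -> nat, k <= ncolors adjG c -> has_rainbow_copy adjG adjH c.

Lemma rb_prop_exists (T : finType) (adjG : rel T) (U : finType) (adjH : rel U) :
  exists k, `[< rb_prop adjG adjH k >].
Proof.
exists (#|edges adjG|).+1; apply/asboolP => c hc; exfalso.
move: hc; rewrite /ncolors ltnNge; move/negP; apply.
by apply: leq_trans (size_undup _) _; rewrite size_map -cardE.
Qed.

Definition rb (T : finType) (adjG : rel T) (U : finType) (adjH : rel U) : nat :=
  ex_minn (rb_prop_exists adjG adjH).

(* Wheel W_d: vertex 0 is the hub, vertices 1..d form the cycle v_1 ... v_d v_1. *)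
Definition wheel_adj (d : nat) : rel 'I_d.+1 :=
  fun i j => (i != j) &&
    [|| (i == 0 :> nat), (j == 0 :> nat), (i.+1 == j :> nat), (j.+1 == i :> nat),
        (i == 1 :> nat) && (j == d :> nat) | (i == d :> nat) && (j == 1 :> nat)].

(* Fan F_t: vertex i stands for v_{i+1}; cycle v_1 ... v_t v_1 plus chords
   v_1 v_i (3 <= i <= t-1), i.e. v_1 is adjacent to all others and
   v_2 ... v_t is a path. *)
Definition fan_adj (t : nat) : rel 'I_t :=
  fun i j => (i != j) &&
    [|| (i == 0 :> nat), (j == 0 :> nat), (i.+1 == j :> nat) | (j.+1 == i :> nat)].

(* Main.v *)
Require Import Defs.
From mathcomp Require Import all_boot zify boolp.
Set Implicit Arguments. Unset Strict Implicit. Unset Printing Implicit Defensive.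

Definition colf (d p M S : nat) : nat :=
  let m := S - M in
  if m == 0 then M else if M == m.+1 then (if m %% p == 0 then M else d + M) else m.

Definition wcol (d p : nat) (e : {set 'I_d.+1}) : nat :=
  colf d p (\max_(i in e) (i : nat)) (\sum_(i in e) (i : nat)).

Definition col2 d p a b := colf d p (maxn a b) (a + b).

Lemma wcol2 d p (a b : 'I_d.+1) : a != b -> wcol p [set a; b] = col2 d p a b.
Proof.
move=> ab; rewrite /wcol /col2 big_setU1 ?inE // big_set1 big_setU1 ?inE // big_set1.
by [].
Qed.

Lemma imset2E (T U : finType) (f : T -> U) (a b : T) : f @: [set a; b] = [set f a; f b].
Proof. by rewrite imsetU1 imset_set1. Qed.

Lemma col2C d p a b : col2 d p a b = col2 d p b a.
Proof. by rewrite /col2 maxnC addnC. Qed.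

Lemma col2_spoke d p v : 0 < v -> col2 d p 0 v = v.
Proof. by move=> v0; rewrite /col2 /colf max0n add0n subnn. Qed.

Definition blk p v := (v - 1) %/ p.

Lemma key d p a b : 3 <= d -> 0 < p -> 0 < a <= d -> 0 < b <= d -> a != b ->
  [|| a.+1 == b, b.+1 == a, (a == 1) && (b == d) | (a == d) && (b == 1)] ->
  [\/ blk p a = blk p b, col2 d p a b = a | col2 d p a b = b].
Proof.
move=> d3 p0 ha hb ab.
wlog: a b ha hb ab / (a < b).
  move=> W H; case: (ltngtP a b) => [lt|gt|eq].
  - exact: W.
  - have ba : b != a by rewrite eq_sym.
    have H' : [|| b.+1 == a, a.+1 == b, (b == 1) && (a == d) | (b == d) && (a == 1)].
      by move: H; case/or4P => [->|->|/andP[/eqP -> /eqP ->]|/andP[/eqP -> /eqP ->]]; rewrite ?eqxx ?orbT.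
    have [||] := W b a hb ha ba gt H'.
    + by move=> ->; constructor 1.
    + by rewrite col2C => ->; constructor 3.
    + by rewrite col2C => ->; constructor 2.
  - by move: ab; rewrite eq eqxx.
move=> lt H.
have Hm : a + b - maxn a b = a by lia.
have [e|ne] := eqVneq b a.+1.
  subst b; rewrite /col2 /colf Hm.
  have -> : (a == 0) = false by lia.
  rewrite (maxn_idPr (leqnSn a)) eqxx.
  case: ifP => [_|]; first by constructor 3.
  move=> nd; constructor 1; rewrite /blk.
  have -> : a.+1 - 1 = (a - 1).+1 by lia.
  rewrite divnS //.
  have -> : (a - 1).+1 = a by lia.
  by rewrite /dvdn nd.
have [a1 bd] : a = 1 /\ b = d by lia.
subst; constructor 2; rewrite /col2 /colf Hm /=.
have -> : (maxn 1 d == 2) = false by lia.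
by [].
Qed.

Lemma block_size p B (L : seq nat) : 0 < p -> uniq L -> (forall x, x \in L -> 0 < x /\ blk p x = B) ->
  size L <= p.
Proof.
move=> p0 uL HL.
suff: size [seq (x - 1) %% p | x <- L] <= size (iota 0 p) by rewrite size_map size_iota.
apply: uniq_leq_size.
  rewrite map_inj_in_uniq // => x y xL yL E.
  have [x0 bx] := HL x xL; have [y0 byy] := HL y yL.
  move: bx byy; rewrite /blk => bx byy.
  have : x - 1 = y - 1 by rewrite (divn_eq (x - 1) p) (divn_eq (y - 1) p) E bx byy.
  lia.
move=> z /mapP [x _ ->]; rewrite mem_iota /= ltn_pmod //.
Qed.
Definition wadjN d (i j : nat) := (i != j) &&
    [|| (i == 0), (j == 0), (i.+1 == j), (j.+1 == i),
        (i == 1) && (j == d) | (i == d) && (j == 1)].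
Lemma wadjE d (a b : 'I_d.+1) : wheel_adj a b = wadjN d a b.
Proof. by []. Qed.
Lemma in_edges (T : finType) (adj : rel T) a b : adj a b -> [set a; b] \in edges adj.
Proof. by move=> h; apply/imset2P; exists a b; rewrite ?inE. Qed.

Lemma count_mult p n : 0 < p -> count (fun a => p %| a) (iota 1 n) = n %/ p.
Proof.
move=> p0; elim: n => [|n IH]; first by rewrite div0n.
rewrite -[n.+1]addn1 iotaD count_cat IH /= addn0 addn1 divnS // add1n addnC.
by [].
Qed.

Lemma count_nmult p n : 0 < p -> count (fun a => a %% p != 0) (iota 1 n) = n - n %/ p.
Proof.
move=> p0; rewrite -(count_mult n p0).
have := count_predC (fun a => p %| a) (iota 1 n); rewrite size_iota.
have -> : count (predC (fun a => p %| a)) (iota 1 n) = count (fun a => a %% p != 0) (iota 1 n).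
  by apply: eq_count => a /=; rewrite /dvdn.
lia.
Qed.

Lemma ncol_ge d p : 3 <= d -> 0 < p ->
  d + ((d - 1) - (d - 1) %/ p) <= ncolors (@wheel_adj d) (wcol p).
Proof.
move=> d3 p0; rewrite /ncolors.
set s := [seq _ | e <- _].
have Hin : forall a b : 'I_d.+1, wheel_adj a b -> wcol p [set a; b] \in undup s.
  move=> a b h; rewrite mem_undup; apply/mapP; exists [set a; b] => //.
  by rewrite mem_enum; apply: in_edges.
set L2 := [seq a.+1 | a <- iota 1 (d - 1) & a %% p != 0].
pose L := iota 1 d ++ [seq d + b | b <- L2].
have -> : d + ((d - 1) - (d - 1) %/ p) = size L.
  by rewrite size_cat size_iota size_map size_map size_filter count_nmult.
apply: uniq_leq_size.
  rewrite cat_uniq iota_uniq /= map_inj_uniq; last by move=> x y; lia.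
  rewrite map_inj_uniq; last by move=> x y [].
  rewrite filter_uniq ?iota_uniq // andbT.
  apply/hasP => -[x /mapP [y /mapP [z _ ->] ->]]; rewrite /= mem_iota => h; lia.
move=> x; rewrite mem_cat => /orP [].
  rewrite mem_iota => hx.
  have ab : (ord0 : 'I_d.+1) != inord x.
    by rewrite -val_eqE /= inordK; lia.
  have -> : x = wcol p [set (ord0 : 'I_d.+1); inord x].
    rewrite wcol2 // /col2 /= inordK; last by lia.
    rewrite max0n add0n /colf subnn //.
  apply: Hin; rewrite wadjE /wadjN /= inordK; last by lia.
  have -> : (0 != x) = true by lia.
  by [].
move=> /mapP [b /mapP [a]]; rewrite mem_filter mem_iota => /andP [nd ha] -> ->.
have ab : (inord a : 'I_d.+1) != inord a.+1.
  by rewrite -val_eqE /= !inordK; lia.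
have -> : d + a.+1 = wcol p [set (inord a : 'I_d.+1); inord a.+1].
  rewrite wcol2 // /col2 /= !inordK; try lia.
  rewrite /colf.
  have -> : maxn a a.+1 = a.+1 by lia.
  have -> : a + a.+1 - a.+1 = a by lia.
  have -> : (a == 0) = false by lia.
  by rewrite eqxx (negbTE nd).
apply: Hin; rewrite wadjE /wadjN /= !inordK; try lia.

Qed.

Lemma arith d p : 0 < p -> 0 < d ->
  ((2 * p.+2 - 5) * d) %/ p.+2 - 0 <= d + ((d - 1) - (d - 1) %/ p.+2).
Abort.
Lemma arith d p : 0 < p -> 0 < d ->
  ((2 * p - 1) * d) %/ p <= d + ((d - 1) - (d - 1) %/ p).
Proof.
move=> p0 d0; rewrite -ltnS ltn_divLR //.
have e := divn_eq (d - 1) p; have hr := ltn_pmod (d - 1) p0.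
move: e hr; set q := (d - 1) %/ p; set r := (d - 1) %% p => e hr.
have hq : q <= d - 1 by rewrite /q leq_div.
nia.
Qed.
Definition fanN (i j : nat) := (i != j) && [|| i == 0, j == 0, i.+1 == j | j.+1 == i].

Lemma rimE d a b : 0 < a -> 0 < b -> wadjN d a b ->
  a != b /\ [|| a.+1 == b, b.+1 == a, (a == 1) && (b == d) | (a == d) && (b == 1)].
Proof.
move=> a0 b0; rewrite /wadjN.
have -> : (a == 0) = false by lia.
have -> : (b == 0) = false by lia.
by move=> /andP [-> /= ->].
Qed.

Lemma norainbow d T : 3 <= T -> T <= d ->
  ~ has_rainbow_copy (@wheel_adj d) (@fan_adj T.+1) (wcol (T.+1 - 2)).
Proof.
move=> hT hd [f [finj fhom fcol]].
set p := T.+1 - 2.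
have p0 : 0 < p by rewrite /p; lia.
have d3 : 3 <= d by lia.
pose g i := val (f (inord i)).
have gb : forall i, g i <= d by move=> i; rewrite /g -ltnS ltn_ord.
have ginj : forall i j, i <= T -> j <= T -> g i = g j -> i = j.
  move=> i j hi hj /val_inj /finj /(congr1 (@nat_of_ord _)); rewrite !inordK //.
have gadj : forall i j, i <= T -> j <= T -> fanN i j -> wadjN d (g i) (g j).
  move=> i j hi hj h; rewrite /g -wadjE; apply: fhom.
  have E : fan_adj (inord i : 'I_T.+1) (inord j) = fanN (inord i) (inord j) := erefl.
  by rewrite E !inordK.
have gcol : forall i j i' j' x, i <= T -> j <= T -> i' <= T -> j' <= T ->
    fanN i j -> fanN i' j' -> (x == i) || (x == j) -> x != i' -> x != j' ->
    col2 d p (g i) (g j) = col2 d p (g i') (g j') -> False.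
  move=> i j i' j' x hi hj hi' hj' h1 h2 hx n1 n2 hc.
  have ne : forall i j, i <= T -> j <= T -> fanN i j -> f (inord i) != f (inord j).
    by move=> i0 j0 hi0 hj0 /(gadj _ _ hi0 hj0) /andP [+ _]; rewrite -val_eqE.
  have e1 : [set (inord i : 'I_T.+1); inord j] \in edges (@fan_adj T.+1).
    apply: in_edges.
    have E : fan_adj (inord i : 'I_T.+1) (inord j) = fanN (inord i) (inord j) := erefl.
    by rewrite E !inordK.
  have e2 : [set (inord i' : 'I_T.+1); inord j'] \in edges (@fan_adj T.+1).
    apply: in_edges.
    have E : fan_adj (inord i' : 'I_T.+1) (inord j') = fanN (inord i') (inord j') := erefl.
    by rewrite E !inordK.
  have := fcol _ _ e1 e2; rewrite /= !imset2E !wcol2 ?ne //.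
  move=> /(_ hc) E; have := congr1 (fun S : {set 'I_T.+1} => (inord x : 'I_T.+1) \in S) E.
  have hxT : x <= T by move: hx => /orP [] /eqP ->.
  rewrite !inE -!val_eqE /= !inordK //.
  by rewrite hx (negbTE n1) (negbTE n2).
have gsym : forall i j, col2 d p (g i) (g j) = col2 d p (g j) (g i) by move=> i j; apply: col2C.
have gL : forall L, all (fun i => i <= T) L -> uniq L -> uniq [seq g i | i <- L].
  move=> L hL uL; rewrite map_inj_in_uniq // => i j iL jL; apply: ginj.
  - by move/allP: hL => /(_ i iL).
  - by move/allP: hL => /(_ j jL).
have [h0|h0] := eqVneq (g 0) 0.
  have gnz : forall i, 1 <= i <= T -> 0 < g i.
    move=> i hi; case: (posnP (g i)) => // gi; have := ginj i 0; lia.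
  have step : forall i, 1 <= i -> i < T -> blk p (g i) = blk p (g i.+1).
    move=> i h1 h2.
    have ad : wadjN d (g i) (g i.+1) by apply: gadj; rewrite // /fanN; lia.
    have gi : 0 < g i by apply: gnz; lia.
    have gi1 : 0 < g i.+1 by apply: gnz; lia.
    have [ne rim] := rimE gi gi1 ad.
    have ha : 0 < g i <= d by rewrite gi gb.
    have hb : 0 < g i.+1 <= d by rewrite gi1 gb.
    case: (key d3 p0 ha hb ne rim) => //.
    - move=> c; exfalso; apply: (gcol i i.+1 0 i i.+1); rewrite ?c /fanN //; try lia.
      by rewrite h0 col2_spoke //; apply: gnz; lia.
    - move=> c; exfalso; apply: (gcol i i.+1 0 i.+1 i); rewrite ?c /fanN //; try lia.
      by rewrite h0 col2_spoke //; apply: gnz; lia.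
  have allb : forall i, 1 <= i <= T -> blk p (g i) = blk p (g 1).
    elim=> [|i IH] hi; first lia.
    case: (eqVneq i 0) => [->//|i0].
    rewrite -step; [apply: IH| |]; lia.
  have := @block_size p (blk p (g 1)) [seq g i | i <- iota 1 T] p0.
  rewrite size_map size_iota /p.
  have -> : uniq [seq g i | i <- iota 1 T].
    apply: gL; last exact: iota_uniq.
    by apply/allP => i; rewrite mem_iota; lia.
  move=> /(_ isT) H.
  suff : T <= T.+1 - 2 by lia.
  apply: H => x /mapP [i]; rewrite mem_iota => hi ->.
  split; [apply: gnz | apply: allb]; lia.
set h := g 0.
have hpos : 0 < h by rewrite lt0n.
set s := if h == d then 1 else h.+1.
set q := if h == 1 then d else h.-1.
have nb : forall i, 1 <= i <= T -> g i \in [:: 0; s; q].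
  move=> i hi; have : wadjN d h (g i) by apply: gadj; rewrite // /fanN; lia.
  have := gb 0; rewrite -/h => hhd. have := gb i => gid.
  rewrite /wadjN !inE /s /q.
  case: ifP => /eqP e1; case: ifP => /eqP e2; lia.
set L := [seq g i | i <- iota 1 T].
have uL : uniq L.
  apply: gL; last exact: iota_uniq.
  by apply/allP => i; rewrite mem_iota; lia.
have sL : {subset L <= [:: 0; s; q]}.
  by move=> x /mapP [i]; rewrite mem_iota => hi ->; apply: nb; lia.
have T3 : T = 3.
  have := uniq_leq_size uL sL; rewrite size_map size_iota /=; lia.
have [i0 [hi0 gi0]] : exists i0, 1 <= i0 <= 3 /\ g i0 = 0.
  case: (boolP (0 \in L)) => [/mapP [i]|nL].
    by rewrite mem_iota T3 => hi e; exists i; split; [lia|rewrite e].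
  have sL' : {subset L <= [:: s; q]}.
    move=> x xL; have := sL x xL; rewrite !inE; case/orP => // /eqP e.
    by move: nL; rewrite -e xL.
  have := uniq_leq_size uL sL'; rewrite size_map size_iota /=; lia.
subst T.
have gnz : forall i, i <= 3 -> i != i0 -> 0 < g i.
  move=> i hi ne; case: (posnP (g i)) => // gi; have := ginj i i0; lia.
have hb : forall i, i <= 3 -> i != i0 -> 0 < g i <= d.
  by move=> i hi ne; rewrite gnz ?gb.
have gdist : forall i j, i <= 3 -> j <= 3 -> i != j -> g i != g j.
  move=> i j hi hj ne; apply/eqP => e; have := ginj i j hi hj e; lia.
have keyg : forall i j, i <= 3 -> j <= 3 -> i != i0 -> j != i0 -> i != j -> fanN i j ->
    [\/ blk p (g i) = blk p (g j), col2 d p (g i) (g j) = g i | col2 d p (g i) (g j) = g j].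
  move=> i j hi hj ni nj ij hf.
  have [ne rim] := rimE (gnz i hi ni) (gnz j hj nj) (gadj i j hi hj hf).
  exact: key d3 p0 (hb i hi ni) (hb j hj nj) ne rim.
have sp : forall i, i <= 3 -> col2 d p (g i) (g i0) = g i /\ col2 d p (g i0) (g i) = g i.
  move=> i hi; case: (eqVneq i i0) => [->|ne]; first by rewrite gi0 /col2 /colf.
  by rewrite col2C gi0 col2_spoke ?(gnz i hi ne).
have three : forall a b c, a <= 3 -> b <= 3 -> c <= 3 -> uniq [:: a; b; c] ->
    a != i0 -> b != i0 -> c != i0 ->
    blk p (g a) = blk p (g b) -> blk p (g b) = blk p (g c) -> False.
  move=> a b c ha hb' hc u na nb' nc e1 e2.
  have := @block_size p (blk p (g a)) [seq g i | i <- [:: a; b; c]] p0.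
  rewrite gL ?u //=; last by rewrite ha hb' hc.
  move=> /(_ isT) H.
  suff : 3 <= p by rewrite /p.
  apply: H => x; rewrite !inE => /or3P [] /eqP ->; rewrite ?gnz //; lia.
have : i0 = 1 \/ i0 = 2 \/ i0 = 3 by lia.
case=> [?|[?|?]]; subst i0.
- have [e1|c|c] := keyg 0 2 isT isT isT isT isT isT.
  + have [e2|c2|c2] := keyg 0 3 isT isT isT isT isT isT.
    * exact: (three 2 0 3 isT isT isT isT isT isT isT (esym e1) e2).
    * by apply: (gcol 0 3 0 1 3) => //; rewrite c2 (sp 0 isT).1.
    * have [e3|c3|c3] := keyg 2 3 isT isT isT isT isT isT.
      -- exact: (three 0 2 3 isT isT isT isT isT isT isT e1 e3).
      -- by apply: (gcol 2 3 1 2 3) => //; rewrite c3 (sp 2 isT).2.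
      -- by apply: (gcol 0 3 2 3 0) => //; rewrite c2 c3.
  + by apply: (gcol 0 2 0 1 2) => //; rewrite c (sp 0 isT).1.
  + by apply: (gcol 0 2 1 2 0) => //; rewrite c (sp 2 isT).2.
- have [e1|c|c] := keyg 0 1 isT isT isT isT isT isT.
  + have [e2|c|c] := keyg 0 3 isT isT isT isT isT isT.
    * exact: (three 1 0 3 isT isT isT isT isT isT isT (esym e1) e2).
    * by apply: (gcol 0 3 0 2 3) => //; rewrite c (sp 0 isT).1.
    * by apply: (gcol 0 3 2 3 0) => //; rewrite c (sp 3 isT).2.
  + by apply: (gcol 0 1 0 2 1) => //; rewrite c (sp 0 isT).1.
  + by apply: (gcol 0 1 2 1 0) => //; rewrite c (sp 1 isT).2.
- have [e1|c|c] := keyg 0 2 isT isT isT isT isT isT.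
  + have [e2|c2|c2] := keyg 0 1 isT isT isT isT isT isT.
    * exact: (three 2 0 1 isT isT isT isT isT isT isT (esym e1) e2).
    * by apply: (gcol 0 1 0 3 1) => //; rewrite c2 (sp 0 isT).1.
    * have [e3|c3|c3] := keyg 1 2 isT isT isT isT isT isT.
      -- exact: (three 0 2 1 isT isT isT isT isT isT isT e1 (esym e3)).
      -- by apply: (gcol 0 1 1 2 0) => //; rewrite c2 c3.
      -- by apply: (gcol 1 2 2 3 1) => //; rewrite c3 (sp 2 isT).1.
  + by apply: (gcol 0 2 0 3 2) => //; rewrite c (sp 0 isT).1.
  + by apply: (gcol 0 2 2 3 0) => //; rewrite c (sp 2 isT).1.
Qed.

Theorem theorem4p1 (d t : nat) (hdt : t.-1 <= d) (ht : 4 <= t) :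
  ((2 * t - 5) * d) %/ (t - 2) + 1 <= rb (@wheel_adj d) (@fan_adj t).
Proof.
move: hdt ht; case: t => [|T] // hdt ht.
rewrite /= in hdt.
have hT : 3 <= T by lia.
rewrite /rb; case: ex_minnP => m /asboolP Hm _.
rewrite addn1 ltnNge; apply/negP => hm.
apply: (@norainbow d T hT hdt); apply: Hm.
apply: (leq_trans hm).
have -> : 2 * T.+1 - 5 = 2 * (T.+1 - 2) - 1 by lia.
apply: leq_trans (arith _ _) (ncol_ge _ _); lia.
Qed.
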